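(* Let $G$ be a connected graph, let $\mathcal{P}=(X_1,\ldots,X_l)$ be a path decomposition of $G$ of width $k\leq 3$, and let $S$ be a bottleneck set. Then $t_1(S)$ and $t_2(S)$ are well-defined (the sets over which the minimum and maximum are taken are nonempty) and $t_1(S)\leq t_2(S)$, so $I(S)$ is nonempty; moreover: (i) there is at least one green $S$-branch; (ii) the number of $S$-branches colored red, purple or gray is at most $2k$; (iii) the number of $S$-branches colored blue, purple or black is at most $2k$.
   Context: A path decomposition of $G$ is a sequence $(X_1,\ldots,X_l)$ of subsets of $V(G)$ covering $V(G)$, such that every edge lies in some $X_i$, and $X_i\cap X_k\subseteq X_j$ whenever $i\leq j\leq k$; width is $\max_i|X_i|-1$. For a subgraph $H$, $\alpha(H)=\min\{i: X_i\cap V(H)\neq\emptyset\}$, $\beta(H)=\max\{i: X_i\cap V(H)\neq\emptyset\}$. For $S\subseteq V(G)$, an $S$-component is a connected component $H$ of $G-S$ such that every vertex of $S$ has a neighbor in $V(H)$; an $S$-branch is an $S$-component with at least two vertices. $S$ is a bottleneck set if $S\neq\emptyset$ and there are at least $13$ $S$-branches. Define $t_1(S)=\min\{\alpha(H): H \text{ an } S\text{-branch with } S\subseteq X_{\alpha(H)}\cap X_{\alpha(H)-1}\}$ and $t_2(S)=\max\{\beta(H): H \text{ an } S\text{-branch with } S\subseteq X_{\beta(H)}\cap X_{\beta(H)+1}\}$ (with $X_0=X_{l+1}=\emptyset$), and $I(S)=\{t_1(S),\ldots,t_2(S)\}$. Each $S$-branch $H$ is colored: green if $t_1(S)\leq\alpha(H)\leq\beta(H)\leq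 t_2(S)$; red if $\alpha(H)<t_1(S)\leq\beta(H)\leq t_2(S)$; blue if $t_1(S)\leq\alpha(H)\leq t_2(S)<\beta(H)$; purple if $\alpha(H)<t_1(S)\leq t_2(S)<\beta(H)$; gray if $\beta(H)<t_1(S)$; black if $\alpha(H)>t_2(S)$. *)

(* Defs.v *)
From mathcomp Require Import all_boot.
Set Implicit Arguments. Unset Strict Implicit. Unset Printing Implicit Defensive.

Section Defs.
Variables (V : finType) (e : rel V).

Definition simple_graph : Prop := symmetric e /\ irreflexive e.
Definition connected_graph : Prop := forall x y : V, connect e x y.

(* Bags are 1-indexed: bag X i = X_i for 1 <= i <= size X, and set0
   otherwise (in particular X_0 = X_{l+1} = set0). *)
Definition bag (X : seq {set V}) (i : nat) : {set V} :=
  if (0 < i) && (i <= size X) then nth set0 X i.-1 else set0.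

Definition is_path_decomposition (X : seq {set V}) : Prop :=
  [/\ forall v : V, exists2 i, (1 <= i <= size X) & v \in bag X i,
      forall u v : V, e u v -> exists2 i, (1 <= i <= size X) &
                                 (u \in bag X i) && (v \in bag X i)
    & forall i j k, 1 <= i -> i <= j -> j <= k -> k <= size X ->
        bag X i :&: bag X k \subset bag X j].

Definition width (X : seq {set V}) : nat := (\max_(B <- X) #|B|) - 1.

Definition alpha (X : seq {set V}) (H : {set V}) : nat :=
  \big[minn/(size X).+1]_(1 <= i < (size X).+1 | bag X i :&: H != set0) i.
Definition beta (X : seq {set V}) (H : {set V}) : nat :=
  \max_(1 <= i < (size X).+1 | bag X i :&: H != set0) i.

Definition induced_rel (H : {set V}) : rel V :=
  [rel x y | [&& e x y, x \in H & y \in H]].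
Definition is_component_of (S H : {set V}) : bool :=
  [&& H != set0, [disjoint H & S],
      [forall x in H, forall y in H, connect (induced_rel H) x y] &
      [forall x in H, forall y, (e x y && (y \notin S)) ==> (y \in H)]].

Definition S_component (S H : {set V}) : bool :=
  is_component_of S H && [forall s in S, exists h in H, e s h].
Definition S_branch (S H : {set V}) : bool := S_component S H && (1 < #|H|).

Definition bottleneck (S : {set V}) : bool :=
  (S != set0) && (13 <= #|[set H | S_branch S H]|).

Definition t1_cond (X : seq {set V}) (S H : {set V}) : bool :=
  S_branch S H && (S \subset bag X (alpha X H) :&: bag X (alpha X H).-1).
Definition t2_cond (X : seq {set V}) (S H : {set V}) : bool :=
  S_branch S H && (S \subset bag X (beta X H) :&: bag X (beta X H).+1).

(* The defaults are irrelevant once the index sets are shown nonempty. *)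
Definition t1 (X : seq {set V}) (S : {set V}) : nat :=
  \big[minn/(size X).+1]_(H : {set V} | t1_cond X S H) alpha X H.
Definition t2 (X : seq {set V}) (S : {set V}) : nat :=
  \max_(H : {set V} | t2_cond X S H) beta X H.

Definition green X S H := (t1 X S <= alpha X H) && (beta X H <= t2 X S).
Definition red X S H :=
  [&& alpha X H < t1 X S, t1 X S <= beta X H & beta X H <= t2 X S].
Definition blue X S H :=
  [&& t1 X S <= alpha X H, alpha X H <= t2 X S & t2 X S < beta X H].
Definition purple X S H :=
  [&& alpha X H < t1 X S, t1 X S <= t2 X S & t2 X S < beta X H].
Definition gray X S H := beta X H < t1 X S.
Definition black X S H := t2 X S < alpha X H.

End Defs.

(* Main.v *)
Require Import Defs.
From mathcomp Require Import all_boot.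
From mathcomp Require Import zify.
Set Implicit Arguments. Unset Strict Implicit. Unset Printing Implicit Defensive.

Section Proof.
Variables (V : finType) (e : rel V) (X : seq {set V}).
Hypothesis PD : is_path_decomposition e X.

Definition meets (H : {set V}) i := bag X i :&: H != set0.

Lemma bag_range v i : v \in bag X i -> 0 < i <= size X.
Proof. by rewrite /bag; case: ifP => //; rewrite inE. Qed.

Lemma meets_range H i : meets H i -> 0 < i <= size X.
Proof.
rewrite /meets; case/set0Pn => v; rewrite inE => /andP[/bag_range] //.
Qed.

Lemma bigmin_le (I : eqType) (r : seq I) (P : pred I) (F : I -> nat) d i :
  i \in r -> P i -> \big[minn/d]_(j <- r | P j) F j <= F i.
Proof.
elim: r => // x r IH; rewrite inE big_cons => /orP[/eqP <- ->|ir Pi].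
  exact: geq_minl.
case: ifP => _; last exact: IH.
by rewrite geq_min IH ?orbT.
Qed.

Lemma alpha_le H i : meets H i -> alpha X H <= i.
Proof.
move=> Hm; have /andP[i0 iS] := meets_range Hm.
rewrite /alpha; apply: bigmin_le; last exact: Hm.
by rewrite mem_iota i0 subn1 /= add1n ltnS.
Qed.

Lemma alpha_meets H i : meets H i -> meets H (alpha X H).
Proof.
move=> Hm.
have : meets H (alpha X H) || (alpha X H == (size X).+1).
  rewrite /alpha; apply: (big_ind (fun j => meets H j || (j == (size X).+1))) => //; first by rewrite eqxx orbT.
  move=> x y Px Py /=; case: (leqP x y) => xy.
    by [].
  by [].
  by move=> j Hj; rewrite /meets Hj.
case/orP => // /eqP E; have := alpha_le Hm; rewrite E.
by have /andP[_ iS] := meets_range Hm; rewrite ltnNge iS.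
Qed.

Lemma beta_ge H i : meets H i -> i <= beta X H.
Proof.
move=> Hm; have /andP[i0 iS] := meets_range Hm.
rewrite /beta; apply: (@leq_bigmax_seq _ _ _ (fun i => i)) => //.
by rewrite mem_iota i0 subn1 /= add1n ltnS.
Qed.

Lemma beta_meets H i : meets H i -> meets H (beta X H).
Proof.
move=> Hm.
have : meets H (beta X H) || (beta X H == 0).
  rewrite /beta; apply: (big_ind (fun j => meets H j || (j == 0))) => //; first by rewrite eqxx orbT.
  move=> x y Px Py /=; case: (leqP x y) => xy.
    by [].
  by [].
  by move=> j Hj; rewrite /meets Hj.
case/orP => // /eqP E; have := beta_ge Hm; rewrite E.
by have /andP[i0 _] := meets_range Hm; rewrite leqn0 => /eqP Ei; rewrite Ei in i0.
Qed.

Lemma bag_between v i j m : v \in bag X i -> v \in bag X m -> i <= j <= m ->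
  v \in bag X j.
Proof.
move=> vi vm /andP[ij jm]; case: PD => _ _ P3.
have /andP[i0 _] := bag_range vi; have /andP[_ mS] := bag_range vm.
by apply: (subsetP (P3 i j m i0 ij jm mS)); rewrite inE vi vm.
Qed.

Lemma meets1 s i : meets [set s] i = (s \in bag X i).
Proof.
rewrite /meets; apply/set0Pn/idP => [[v]|vi]; last by exists s; rewrite !inE vi eqxx.
by rewrite !inE => /andP[vi /eqP <-].
Qed.

Lemma cover v : exists i, v \in bag X i.
Proof. by case: PD => P1 _ _; case: (P1 v) => i _ vi; exists i. Qed.

Lemma meets_of v (H : {set V}) i : v \in H -> v \in bag X i -> meets H i.
Proof. by move=> vH vi; apply/set0Pn; exists v; rewrite inE vi vH. Qed.

Lemma alpha_le_beta H : H != set0 -> alpha X H <= beta X H.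
Proof.
case/set0Pn => v vH; have [i vi] := cover v.
exact: beta_ge (alpha_meets (meets_of vH vi)).
Qed.


Lemma connect_sub (r : rel V) (A : {set V}) x y : connect r x y ->
  (forall u v, r u v -> u \in A -> v \in A) -> x \in A -> y \in A.
Proof.
case/connectP => p; elim: p x => [|z p IH] x /=; first by move=> _ -> .
by case/andP => rxz pz yl cl xA; apply: (IH z pz yl cl (cl _ _ rxz xA)).
Qed.

Lemma comp_conn S H x y : is_component_of e S H -> x \in H -> y \in H ->
  connect (induced_rel e H) x y.
Proof.
case/and4P => _ _ /forall_inP Hc _ xH yH.
by have /forall_inP := Hc x xH; apply.
Qed.

Lemma comp_closed S H x y : is_component_of e S H -> x \in H -> e x y ->
  y \notin S -> y \in H.
Proof.
case/and4P => _ _ _ /forall_inP Hc xH exy yS.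
by have /forallP /(_ y) := Hc x xH; rewrite exy yS; apply.
Qed.

Lemma comp_disjS S H x : is_component_of e S H -> x \in H -> x \notin S.
Proof.
case/and4P => _ /disjoint_setI0 D _ _ xH; apply/negP => xS.
have : x \in H :&: S by rewrite inE xH xS.
by rewrite D inE.
Qed.


Lemma comp_sub S H H' x : is_component_of e S H -> is_component_of e S H' ->
  x \in H -> x \in H' -> H \subset H'.
Proof.
move=> cH cH' xH xH'; apply/subsetP => y yH.
apply: (connect_sub (comp_conn cH xH yH)) xH' => u v /and3P[euv uH vH] uH'.
exact: comp_closed cH' uH' euv (comp_disjS cH vH).
Qed.

Lemma comp_interval S H i : is_component_of e S H -> alpha X H <= i ->
  i <= beta X H -> meets H i.
Proof.
move=> cH ai ib; apply: contraT => Hni.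
have [x xH] : exists x, x \in H.
  by case/and4P: cH => /set0Pn [x xH] _ _ _; exists x.
have [j xj] := cover x.
have ma := alpha_meets (meets_of xH xj); have mb := beta_meets (meets_of xH xj).
case/set0Pn: ma => a; rewrite inE => /andP[aA aH].
case/set0Pn: mb => b; rewrite inE => /andP[bB bH].
pose A := [set v in H | [exists j : 'I_i, v \in bag X j]].
have cl : forall u v, induced_rel e H u v -> u \in A -> v \in A.
  move=> u v /and3P[euv uH vH]; rewrite inE => /andP[_ /existsP[j' uj]].
  case: PD => _ P2 _; have [m _ /andP[um vm]] := P2 u v euv.
  rewrite inE vH /=; case: (ltnP m i) => mi.
    by apply/existsP; exists (Ordinal mi).
  have ui : u \in bag X i.
    by apply: (bag_between uj um); rewrite mi (ltnW (ltn_ord j')).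
  by case/negP: Hni; apply: meets_of uH ui.
have ai' : alpha X H < i.
  rewrite ltn_neqAle ai andbT; apply/eqP => E.
  by case/negP: Hni; rewrite -E; apply: meets_of aH aA.
have aInA : a \in A by rewrite inE aH /=; apply/existsP; exists (Ordinal ai').
have := connect_sub (comp_conn cH aH bH) cl aInA.
rewrite inE => /andP[_ /existsP[j' bj]].
have bi : b \in bag X i.
  by apply: (bag_between bj bB); rewrite ib (ltnW (ltn_ord j')).
by case/negP: Hni; apply: meets_of bH bi.
Qed.

Lemma count_comps S (F : {set {set V}}) (B : {set V}) :
  (forall H, H \in F -> is_component_of e S H) ->
  (forall H, H \in F -> H :&: (B :\: S) != set0) -> #|F| <= #|B :\: S|.
Proof.
move=> Fc Fm.
case: (set_0Vmem F) => [->|[H0 H0F]]; first by rewrite cards0.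
have [x0 _] := set0Pn _ (Fm H0 H0F).
pose f H := odflt x0 [pick x in H :&: (B :\: S)].
have fP H : H \in F -> f H \in H :&: (B :\: S).
  move=> HF; rewrite /f; case: pickP => [x -> //|none].
  by case/set0Pn: (Fm H HF) => y; rewrite none.
rewrite -(card_in_imset (f:=f) (D:=F)).
  apply: subset_leq_card; apply/subsetP => y /imsetP[H HF ->].
  by have := fP H HF; rewrite inE => /andP[_ ->].
move=> H1 H2 H1F H2F E; have := fP H1 H1F; have := fP H2 H2F.
rewrite -E !inE => /andP[x2 _] /andP[x1 _].
by apply/eqP; rewrite eqEsubset (comp_sub (Fc _ H1F) (Fc _ H2F) x1 x2)
  (comp_sub (Fc _ H2F) (Fc _ H1F) x2 x1).
Qed.

Lemma bag_card k i : width X = k -> #|bag X i| <= k.+1.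
Proof.
move=> W; rewrite /bag; case: ifP => [/andP[i0 iS]|_]; last by rewrite cards0.
have mem : nth set0 X i.-1 \in X by apply: mem_nth; case: i i0 iS.
have Hm := @leq_bigmax_seq _ X xpredT (fun B : {set V} => #|B|) _ mem isT.
move: W Hm; rewrite /width => <- Hm; apply: (leq_trans Hm); rewrite subn1; exact: leqSpred.
Qed.


Lemma t1_le S H : t1_cond e X S H -> t1 e X S <= alpha X H.
Proof. by move=> tc; rewrite /t1; apply: bigmin_le => //; rewrite mem_index_enum. Qed.

Lemma t2_ge S H : t2_cond e X S H -> beta X H <= t2 e X S.
Proof. by move=> tc; rewrite /t2; apply: (@leq_bigmax_cond _ _ (fun H => beta X H)). Qed.

Lemma t1_att S : t1 e X S <= size X ->
  exists2 H, t1_cond e X S H & t1 e X S = alpha X H.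
Proof.
move=> le.
have : (t1 e X S = (size X).+1) \/ exists2 H, t1_cond e X S H & t1 e X S = alpha X H.
  rewrite /t1; apply: (big_ind (fun j => j = (size X).+1 \/ exists2 H, t1_cond e X S H & j = alpha X H)).
  - by left.
  - by move=> x y Px Py; case: (leqP x y).
  - by move=> H tc; right; exists H.
case=> // E; by rewrite E ltnn in le.
Qed.

Lemma t2_att S : 0 < t2 e X S ->
  exists2 H, t2_cond e X S H & t2 e X S = beta X H.
Proof.
move=> le.
have : (t2 e X S = 0) \/ exists2 H, t2_cond e X S H & t2 e X S = beta X H.
  rewrite /t2; apply: (big_ind (fun j => j = 0 \/ exists2 H, t2_cond e X S H & j = beta X H)).
  - by left.
  - by move=> x y Px Py; case: (leqP x y).
  - by move=> H tc; right; exists H.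
case=> // E; by rewrite E in le.
Qed.

End Proof.

Lemma branch_comp (V : finType) (e : rel V) S H : S_branch e S H -> is_component_of e S H.
Proof. by case/andP => /andP[]. Qed.

Theorem mainTheorem13 (V : finType) (e : rel V) (X : seq {set V}) (k : nat)
  (S : {set V}) :
  simple_graph e -> connected_graph e ->
  is_path_decomposition e X -> width X = k -> k <= 3 ->
  bottleneck e S ->
  [/\ (exists H, t1_cond e X S H),
      (exists H, t2_cond e X S H),
      t1 e X S <= t2 e X S &
      [/\ (exists H, S_branch e S H && green e X S H),
      #|[set H | S_branch e S H &&
                 [|| red e X S H, purple e X S H | gray e X S H]]| <= 2 * k
    & #|[set H | S_branch e S H &&
                 [|| blue e X S H, purple e X S H | black e X S H]]| <= 2 * k]].
Proof.
move=> _ _ PD W k3 /andP[S0 Bn].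
have ha s : s \in bag X (alpha X [set s]).
  have [i si] := cover PD s; by rewrite -meets1; apply: alpha_meets; rewrite meets1; exact: si.
have hb s : s \in bag X (beta X [set s]).
  have [i si] := cover PD s; by rewrite -meets1; apply: beta_meets; rewrite meets1; exact: si.
have ha_le s i : s \in bag X i -> alpha X [set s] <= i.
  by move=> si; apply: alpha_le; rewrite meets1.
have hb_ge s i : s \in bag X i -> i <= beta X [set s].
  by move=> si; apply: beta_ge; rewrite meets1.
have F1 H s : S_branch e S H -> s \in S ->
    alpha X [set s] <= beta X H /\ alpha X H <= beta X [set s].
  case/andP => /andP[_ /forall_inP SH] _ sS.
  have /exists_inP[h hH esh] := SH s sS.
  case: PD => _ P2 _; have [m _ /andP[sm hm]] := P2 s h esh.
  split; first exact: leq_trans (ha_le _ _ sm) (beta_ge (meets_of hH hm)).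
  exact: leq_trans (alpha_le (meets_of hH hm)) (hb_ge _ _ sm).
case/set0Pn: (S0) => s0 s0S.
have [sL sLS sLmax] := arg_maxnP (fun s => alpha X [set s]) s0S.
have [sR sRS sRmin] := arg_minnP (fun s => beta X [set s]) s0S.
set L := alpha X [set sL]; set R := beta X [set sR].
have SinBag i : L <= i -> i <= R -> S \subset bag X i.
  move=> Li iR; apply/subsetP => s sS; apply: (bag_between PD (ha s) (hb s)).
  by rewrite (leq_trans (sLmax s sS) Li) (leq_trans iR (sRmin s sS)).
have Scard : 0 < #|S| by rewrite card_gt0.
have meetsD H i : S_branch e S H -> meets X H i -> H :&: (bag X i :\: S) != set0.
  move=> HB; case/set0Pn => v; rewrite inE => /andP[vi vH]; apply/set0Pn; exists v.
  by rewrite !inE vH vi (comp_disjS (branch_comp HB) vH).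
set Br := [set H | S_branch e S H].
have {Bn} Bn : 12 < #|Br| by [].
have Brc H : H \in Br -> is_component_of e S H by rewrite inE; apply: branch_comp.
have LR : L <= R.
  rewrite leqNgt; apply/negP => RL.
  have : #|Br| <= #|bag X R :\: S|.
    apply: (count_comps (e:=e)); first exact: Brc.
    move=> H; rewrite inE => HB; apply: meetsD => //.
    apply: (comp_interval PD (branch_comp HB)).
      exact: (F1 H sR HB sRS).2.
    exact: leq_trans (ltnW RL) (F1 H sL HB sLS).1.
  have := bag_card R W; rewrite cardsD; move: Bn; lia.
have bagSc i : L <= i -> i <= R -> #|bag X i :\: S| <= k.
  move=> Li iR; rewrite cardsD (setIidPr (SinBag i Li iR)).
  have := bag_card i W; lia.
set FL := [set H | S_branch e S H && meets X H L].
set FR := [set H | S_branch e S H && meets X H R].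
have FLc : #|FL| <= k.
  apply: leq_trans (bagSc L (leqnn L) LR); apply: (count_comps (e:=e)) => H.
    by rewrite inE => /andP[HB Hm]; exact: branch_comp.
  by rewrite inE => /andP[HB Hm]; exact: meetsD.
have FRc : #|FR| <= k.
  apply: leq_trans (bagSc R LR (leqnn R)); apply: (count_comps (e:=e)) => H.
    by rewrite inE => /andP[HB Hm]; exact: branch_comp.
  by rewrite inE => /andP[HB Hm]; exact: meetsD.
have : ~~ (Br \subset FL :|: FR).
  apply/negP => sub; have := subset_leq_card sub; rewrite cardsU; move: Bn; lia.
case/subsetPn => H0; rewrite !inE negb_or => HB0 /andP[nL nR].
rewrite HB0 /= in nL nR.
have aLe H : S_branch e S H -> ~~ meets X H L -> L < alpha X H.
  move=> HB nm; rewrite ltnNge; apply/negP => aL; case/negP: nm.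
  exact: (comp_interval PD (branch_comp HB)) aL (F1 H sL HB sLS).1.
have bRe H : S_branch e S H -> ~~ meets X H R -> beta X H < R.
  move=> HB nm; rewrite ltnNge; apply/negP => bR; case/negP: nm.
  exact: (comp_interval PD (branch_comp HB)) (F1 H sR HB sRS).2 bR.
have ab H : S_branch e S H -> alpha X H <= beta X H.
  by move=> HB; apply: (alpha_le_beta PD); case/andP: HB => /andP[/and4P[]].
have aL0 := aLe _ HB0 nL; have bR0 := bRe _ HB0 nR; have ab0 := ab _ HB0.
have tc1 : t1_cond e X S H0.
  by rewrite /t1_cond HB0 subsetI !SinBag //; lia.
have tc2 : t2_cond e X S H0.
  by rewrite /t2_cond HB0 subsetI !SinBag //; lia.
have t1a := t1_le tc1; have t2b := t2_ge tc2.
have amH0 : meets X H0 (alpha X H0).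
  case/andP: HB0 => /andP[/and4P[/set0Pn[v vH] _ _ _] _] _.
  have [i vi] := cover PD v; exact: alpha_meets (meets_of vH vi).
have /andP[a0 aS] := meets_range amH0.
have [H1 tcH1 t1E] := t1_att (leq_trans t1a aS).
have [H2 tcH2 t2E] := t2_att (leq_trans (leq_trans a0 ab0) t2b).
have F6 H : S_branch e S H -> alpha X H < t1 e X S -> meets X H L.
  move=> HB at1; apply: contraT => nm; have aL := aLe _ HB nm.
  have aR : alpha X H1 <= R.
    case/andP: tcH1 => _; rewrite subsetI => /andP[/subsetP sub _].
    exact: hb_ge (sub _ sRS).
  have aR' : alpha X H < R by apply: leq_trans aR; rewrite -t1E.
  have tc : t1_cond e X S H.
    rewrite /t1_cond HB subsetI !SinBag ?(ltnW aR') ?(ltnW aL) //.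
      by case: (alpha X H) aL.
    exact: leq_trans (leq_pred _) (ltnW aR').
  by have := t1_le tc; rewrite leqNgt at1.
have F7 H : S_branch e S H -> t2 e X S < beta X H -> meets X H R.
  move=> HB bt2; apply: contraT => nm; have bR := bRe _ HB nm.
  have bL : L <= beta X H2.
    case/andP: tcH2 => _; rewrite subsetI => /andP[/subsetP sub _].
    exact: ha_le (sub _ sLS).
  have bL' : L < beta X H by apply: leq_ltn_trans bL _; rewrite -t2E.
  have tc : t2_cond e X S H.
    rewrite /t2_cond HB subsetI !SinBag ?(ltnW bR) ?(ltnW bL') //.
    exact: leq_trans (ltnW bL') (leqnSn _).
  by have := t2_ge tc; rewrite leqNgt bt2.
have k2 : k <= 2 * k by rewrite mul2n -addnn leq_addr.
split.
- by exists H0.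
- by exists H0.
- exact: leq_trans t1a (leq_trans ab0 t2b).
split.
- by exists H0; rewrite HB0 /green t1a t2b.
- apply: leq_trans k2; apply: leq_trans FLc.
  apply: subset_leq_card; apply/subsetP => H; rewrite !inE => /andP[HB col].
  rewrite HB /=; apply: (F6 _ HB).
  move: col; rewrite /red /purple /gray; case/or3P => [/and3P[//]|/and3P[//]|g].
  exact: leq_ltn_trans (ab _ HB) g.
- apply: leq_trans k2; apply: leq_trans FRc.
  apply: subset_leq_card; apply/subsetP => H; rewrite !inE => /andP[HB col].
  rewrite HB /=; apply: (F7 _ HB).
  move: col; rewrite /blue /purple /black; case/or3P => [/and3P[_ _ //]|/and3P[_ _ //]|g].
  exact: leq_trans g (ab _ HB).
Qed.
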